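(* Let $A,B,C\in\mathbb{C}$ be the vertices of a nondegenerate counterclockwise triangle. Define $$P_1=A+\rho(C-A),\qquad P_2=A+\rho^{-1}(B-A),$$ $$X=P_2+\rho^{-1}(A-P_2),\qquad Y=P_2+\rho(P_1-P_2).$$ Let $M=(B+C)/2$. Let $\Gamma$ be the circumcircle of the equilateral triangle with side $BM$ whose third vertex lies on the same side of line $BC$ as $A$. Let $\sigma$ be the signed area of the ordered triangle $F_2=(P_2,Y,X)$, positive for counterclockwise. Then: - $\sigma>0$ if $A$ lies outside $\Gamma$; - $\sigma=0$ (the three vertices of $F_2$ are collinear) if $A$ lies on $\Gamma$; - $\sigma<0$ if $A$ lies inside $\Gamma$.
   Context: The plane is identified with $\mathbb{C}$, and $\rho=e^{2\pi i/3}$. Geometric meaning of the construction: - $H_1$ is the regular hexagon erected outwardly on $AC$, and $H_2$ the one erected outwardly on $AB$. - $P_1$ and $P_2$ are the vertices adjacent to $A$, other than $C$ resp. $B$, of $H_1$ resp. $H_2$. - $F_1=(A,P_1,P_2)$ is the flank triangle between $H_1$ and $H_2$. - $X$ is the vertex of $H_2$ adjacent to $P_2$ other than $A$. - $Y$ is the vertex adjacent to $P_2$, other than $P_1$, of the regular hexagon $H_3$ erected on the side $P_1P_2$ of $F_1$. - $F_2$ is the flank triangle between $H_2$ and $H_3$. *)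

(* Defs.v *)
From HB Require Import structures.
From mathcomp Require Import all_boot all_order all_algebra.
From mathcomp Require Import complex.
Set Implicit Arguments. Unset Strict Implicit. Unset Printing Implicit Defensive.
Import Order.TTheory GRing.Theory Num.Theory.
Local Open Scope ring_scope.
Local Open Scope complex_scope.

(* rho = e^{2 pi i/3} = -1/2 + i sqrt(3)/2 *)
Definition rho (R : rcfType) : R[i] := (- (1/2)) +i* (Num.sqrt 3 / 2).

Definition cross (R : rcfType) (u v : R[i]) : R := complex.Re u * complex.Im v - complex.Im u * complex.Re v.

Definition signed_area (R : rcfType) (p q r : R[i]) : R := cross (q - p) (r - p) / 2.

Definition dist2 (R : rcfType) (z w : R[i]) : R := complex.Re (z - w) ^+ 2 + complex.Im (z - w) ^+ 2.

Definition equilateral (R : rcfType) (x y z : R[i]) : Prop :=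
  dist2 x y = dist2 y z /\ dist2 y z = dist2 z x.

Definition same_side (R : rcfType) (x y p q : R[i]) : Prop :=
  0 < signed_area x y p * signed_area x y q.

(* Main.v *)
Require Import Defs.
From HB Require Import structures.
From mathcomp Require Import all_boot all_order all_algebra.
From mathcomp Require Import complex.
From mathcomp Require Import ring lra.
Import Order.TTheory GRing.Theory Num.Theory.
Local Open Scope ring_scope.
Local Open Scope complex_scope.

Lemma rhoV (R : rcfType) : (rho R)^-1 = (- (1/2)) +i* (- (Num.sqrt 3 / 2)).
Proof.
have s3 : Num.sqrt 3 ^+ 2 = 3 :> R by rewrite sqr_sqrtr // ler0n.
have rn : rho R != 0.
  apply/negP=> /eqP/eqP; rewrite eq_complex /= => /andP[/eqP h _].
  by move: h; rewrite -mulNr; move/eqP; rewrite mulf_eq0 oppr_eq0 oner_eq0 invr_eq0 pnatr_eq0.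
apply: (mulfI rn); rewrite mulfV //.
apply/eqP; rewrite eq_complex /=; apply/andP; split; apply/eqP;
  move: s3; set s := Num.sqrt 3 => s3.
  have e: - (1/2) * - (1/2) - s/2 * -(s/2) = 1/4 + s^+2/4 :> R by field.
  by rewrite e s3; (field; done).
by field.
Qed.

Lemma cdiv2 (R : rcfType) (x : R[i]) : x / 2 = (complex.Re x / 2) +i* (complex.Im x / 2).
Proof.
apply: (mulIf (_ : (2:R[i]) != 0)).
  by rewrite pnatr_eq0.
rewrite mulfVK ?pnatr_eq0 //.
case: x => a b; apply/eqP; rewrite eq_complex /=; apply/andP; split; apply/eqP; by field.
Qed.

Theorem mainTheorem3 (R : rcfType) (A B C T O : R[i]) :
  0 < signed_area A B C ->
  let P1 := A + rho R * (C - A) in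
  let P2 := A + (rho R)^-1 * (B - A) in
  let X := P2 + (rho R)^-1 * (A - P2) in
  let Y := P2 + rho R * (P1 - P2) in
  let M := (B + C) / 2 in
  equilateral B M T -> same_side B C T A ->
  dist2 O B = dist2 O M -> dist2 O M = dist2 O T ->
  let sigma := signed_area P2 Y X in
  (dist2 A O > dist2 B O -> 0 < sigma) /\
  (dist2 A O = dist2 B O -> sigma = 0) /\
  (dist2 A O < dist2 B O -> sigma < 0).
Proof.
move=> hABC P1 P2 X Y M [E1 E2] Hss HO1 HO2 sigma.
rewrite /M cdiv2 in E1 E2 Hss HO1 HO2.
rewrite /sigma /Y /X /P2 /P1 rhoV; clear sigma Y X P2 P1 M.
move: hABC E1 E2 Hss HO1 HO2.
case: A => a1 a2; case: B => b1 b2; case: C => c1 c2; case: T => t1 t2; case: O => o1 o2.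
rewrite /signed_area /same_side /signed_area /cross /dist2 /rho /=.
have s3 : Num.sqrt 3 ^+ 2 = 3 :> R by rewrite sqr_sqrtr // ler0n.
have s0 : 0 < Num.sqrt 3 :> R by rewrite sqrtr_gt0 ltr0n.
move: s3 s0; set s := Num.sqrt 3 => s3 s0.
move=> hABC E1 E2 Hss HO1 HO2.
set d1 := (c1 - b1) / 2; set d2 := (c2 - b2) / 2.
set n := d1 ^+ 2 + d2 ^+ 2.
have hud : (t1 - b1) * d1 + (t2 - b2) * d2 = n / 2.
  rewrite /n /d1 /d2; lra.
have huu : (t1 - b1) ^+ 2 + (t2 - b2) ^+ 2 = n.
  rewrite /n /d1 /d2; lra.
set k := d1 * (t2 - b2) - d2 * (t1 - b1).
have hQ : 0 < ((c1 - b1) * (a2 - b2) - (c2 - b2) * (a1 - b1)) / 2 by lra.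
have hk : 0 < k.
  rewrite -(pmulr_lgt0 _ hQ).
  have -> : k * (((c1 - b1) * (a2 - b2) - (c2 - b2) * (a1 - b1)) / 2) =
     ((c1 - b1) * (t2 - b2) - (c2 - b2) * (t1 - b1)) / 2 *
    (((c1 - b1) * (a2 - b2) - (c2 - b2) * (a1 - b1)) / 2) by rewrite /k /d1 /d2; (field; done).
  exact: Hss.
have lag : k ^+ 2 + ((t1 - b1) * d1 + (t2 - b2) * d2) ^+ 2 = n * ((t1 - b1) ^+ 2 + (t2 - b2) ^+ 2).
  by rewrite /k /n; ring.
rewrite hud huu in lag.
have n0 : 0 <= n by rewrite /n; nra.
have hks : k = s * n / 2.
  have : (k - s * n / 2) * (k + s * n / 2) = 0.
    have -> : (k - s * n / 2) * (k + s * n / 2) = k ^+ 2 - s ^+ 2 * n ^+ 2 / 4 by field.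
    rewrite s3; lra.
  have hp : 0 < k + s * n / 2 by nra.
  move/eqP; rewrite mulf_eq0 (gt_eqF hp) orbF subr_eq0 => /eqP //.
have npos : 0 < n.
  have : 0 < s * n by lra.
  by rewrite pmulr_rgt0.
have hwd : (o1 - b1) * d1 + (o2 - b2) * d2 = n / 2 by rewrite /n /d1 /d2; lra.
have hwu : (o1 - b1) * (t1 - b1) + (o2 - b2) * (t2 - b2) = n / 2.
  rewrite /n /d1 /d2 in huu *; lra.
set wJ := - (o1 - b1) * d2 + (o2 - b2) * d1.
have dec : n * ((o1 - b1) * (t1 - b1) + (o2 - b2) * (t2 - b2)) =
   ((t1 - b1) * d1 + (t2 - b2) * d2) * ((o1 - b1) * d1 + (o2 - b2) * d2) + k * wJ.
  by rewrite /n /k /wJ; ring.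
rewrite hwu hud hwd hks in dec.
have hwJ : s * wJ = n / 2.
  apply: (mulfI (lt0r_neq0 npos)).
  have : n * (n / 4 - s * wJ / 2) = 0.
    have -> : n * (n / 4 - s * wJ / 2) = n * (n / 2) - (n / 2 * (n / 2) + s * n / 2 * wJ) by field.
    by rewrite -dec subrr.
  move/eqP; rewrite mulf_eq0 (gt_eqF npos) /= subr_eq0 => /eqP h.
  have -> : s * wJ = 2 * (s * wJ / 2) by field.
  rewrite -h; (field; done).
set e1 := a1 - b1; set e2 := a2 - b2.
have dec2 : n * (e1 * (o1 - b1) + e2 * (o2 - b2)) =
   (e1 * d1 + e2 * d2) * ((o1 - b1) * d1 + (o2 - b2) * d2) + (- e1 * d2 + e2 * d1) * wJ.
  by rewrite /n /wJ; ring.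
have hfin : s * ((a1 - o1) ^+ 2 + (a2 - o2) ^+ 2 - ((b1 - o1) ^+ 2 + (b2 - o2) ^+ 2))
   = s * (e1 ^+ 2 + e2 ^+ 2) - s * (e1 * d1 + e2 * d2) - (- e1 * d2 + e2 * d1).
  apply: (mulfI (lt0r_neq0 npos)).
  have -> : n * (s * ((a1 - o1) ^+ 2 + (a2 - o2) ^+ 2 - ((b1 - o1) ^+ 2 + (b2 - o2) ^+ 2)))
     = s * n * (e1 ^+ 2 + e2 ^+ 2) - 2 * s * (n * (e1 * (o1 - b1) + e2 * (o2 - b2))) by rewrite /e1 /e2; ring.
  rewrite dec2 hwd.
  have -> : 2 * s * ((e1 * d1 + e2 * d2) * (n / 2) + (- e1 * d2 + e2 * d1) * wJ)
     = s * n * (e1 * d1 + e2 * d2) + 2 * (- e1 * d2 + e2 * d1) * (s * wJ) by field.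
  rewrite hwJ; (field; done).
match goal with |- (_ -> is_true (_ < ?e)) /\ _ => set sig := e end.
have key : 2 * sig = s * ((a1 - o1) ^+ 2 + (a2 - o2) ^+ 2 - ((b1 - o1) ^+ 2 + (b2 - o2) ^+ 2)).
  rewrite hfin /sig /e1 /e2 /d1 /d2.
  by field: s3.
split; [|split].
- move=> h; have : 0 < s * ((a1 - o1) ^+ 2 + (a2 - o2) ^+ 2 - ((b1 - o1) ^+ 2 + (b2 - o2) ^+ 2)).
    by apply: mulr_gt0 => //; rewrite subr_gt0.
  lra.
- move=> h; move: key; rewrite h subrr mulr0; lra.
- move=> h; have : 0 < s * (((b1 - o1) ^+ 2 + (b2 - o2) ^+ 2) - ((a1 - o1) ^+ 2 + (a2 - o2) ^+ 2)).
    by apply: mulr_gt0 => //; rewrite subr_gt0.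
  have -> : s * (((b1 - o1) ^+ 2 + (b2 - o2) ^+ 2) - ((a1 - o1) ^+ 2 + (a2 - o2) ^+ 2)) = - (2 * sig).
    by rewrite key; ring.
  lra.
Qed.
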